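(* Let $K$ be a convex set (in some real vector space). Let $\mathcal{D}(K)$ be the collection of all finite ensembles over $K$, regarded as a test space with outcome set $X(K)=(0,1]\times K$. Then the only probability weight on $\mathcal{D}(K)$ is the function $\rho:(0,1]\times K\to[0,1]$ given by $\rho((t,\alpha))=t$.
   Context: A finite ensemble over $K$ is a finite set of pairs $\{(t_1,\alpha_1),\dots,(t_n,\alpha_n)\}$ with $\alpha_i\in K$, $t_i\in(0,1]$ and $\sum_{i=1}^n t_i=1$. A probability weight on a collection $\mathcal{M}$ of sets (a test space) with $X=\bigcup\mathcal{M}$ is a function $f:X\to[0,1]$ such that $\sum_{x\in E}f(x)=1$ for every $E\in\mathcal{M}$. *)

(* Defs.v *)
From HB Require Import structures.
From mathcomp Require Import all_boot all_order all_algebra.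
From mathcomp Require Import finmap.
From mathcomp Require Import boolp classical_sets reals convex.
Set Implicit Arguments. Unset Strict Implicit. Unset Printing Implicit Defensive.
Import Order.TTheory GRing.Theory Num.Theory.
Local Open Scope ring_scope.

Definition outcome (R : realType) (V : lmodType R) (K : set V) (x : R * V) : Prop :=
  (0 < x.1 <= 1) /\ K x.2.

Definition ensemble (R : realType) (V : lmodType R) (K : set V)
    (E : {fset (R * V)}) : Prop :=
  (forall x, x \in E -> outcome K x) /\ \sum_(x <- E) x.1 = 1.

(* Probability weight on the test space D(K) (all finite ensembles),
   with outcome set X(K) = (0,1] x K. Only values on X(K) are constrained. *)
Definition prob_weight (R : realType) (V : lmodType R) (K : set V)
    (f : R * V -> R) : Prop :=
  (forall x, outcome K x -> 0 <= f x <= 1) /\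
  (forall E, ensemble K E -> \sum_(x <- E) f x = 1).

(* Main.v *)
Require Import Defs.
From HB Require Import structures.
From mathcomp Require Import all_boot all_order all_algebra.
From mathcomp Require Import finmap.
From mathcomp Require Import boolp classical_sets reals convex.
Import Order.TTheory GRing.Theory Num.Theory.
From mathcomp Require Import lra.
Local Open Scope ring_scope.

Lemma avoid_small (R : realType) (B : seq R) :
  exists2 e : R, 0 < e & forall x, 0 < x -> x < e -> x \notin B.
Proof.
elim: B => [|b B [e he hB]]; first by exists 1 => // x.
case: (ltP 0 b) => hb.
- exists (Num.min e b); first by rewrite lt_min he hb.
  move=> x x0; rewrite lt_min => /andP[xe xb]; rewrite in_cons negb_or hB // andbT.
  by apply/eqP => xb'; move: xb; rewrite xb' ltxx.
- exists e => // x x0 xe; rewrite in_cons negb_or hB // andbT.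
  by apply/eqP => xb'; move: x0; rewrite xb' => /(le_lt_trans hb); rewrite ltxx.
Qed.

Lemma pick2 (R : realType) (r : R) (B : seq R) : 0 < r ->
  exists u1, exists u2, [/\ 0 < u1, 0 < u2, u1 + u2 = r, u1 != u2 &
     (u1 \notin B) && (u2 \notin B)].
Proof.
move=> r0.
have [e e0 he] := avoid_small R (B ++ map (fun b => r - b) B).
set m := Num.min e (r / 2).
have m0 : 0 < m by rewrite lt_min e0 divr_gt0.
have me : m <= e by rewrite ge_min lexx.
have mr : m <= r / 2 by rewrite ge_min lexx orbT.
exists (m / 2), (r - m / 2).
have u1B : m / 2 \notin B ++ map (fun b => r - b) B.
  apply: he; first by rewrite divr_gt0.
  lra.
move: u1B; rewrite mem_cat negb_or => /andP[h1 h2].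
split.
- by rewrite divr_gt0.
- lra.
- lra.
- apply/eqP => h; lra.
- rewrite h1 /=; apply/negP => h; move/negP: h2; apply.
  by apply/mapP; exists (r - m / 2) => //; rewrite opprB addrC subrK.
Qed.
Arguments pick2 {R} r B.



Lemma elem_le_sum (R : realType) (s : seq R) t :
  all (fun u => 0 <= u) s -> t \in s -> t <= \sum_(u <- s) u.
Proof.
elim: s => [//|b s IH] /= /andP[b0 hs]; rewrite in_cons big_cons => /orP[/eqP->|ts].
- have : 0 <= \sum_(u <- s) u by rewrite big_seq; apply: sumr_ge0 => i /(allP hs).
  lra.
- have := IH hs ts; lra.
Qed.

Lemma ens_sum (R : realType) (V : lmodType R) (K : set V) (f : R * V -> R)
  (hf : prob_weight K f) (a : V) (Ka : K a) (s : seq R) :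
  uniq s -> all (fun u => 0 < u) s -> \sum_(u <- s) u = 1 ->
  \sum_(u <- s) f (u, a) = 1.
Proof.
move=> us ps s1.
have := hf.2 (seq_fset tt (map (fun t => (t, a)) s)).
rewrite (perm_big _ (seq_fset_perm _ _)) undup_id; last first.
  by rewrite map_inj_uniq // => x y [].
rewrite big_map; apply; split.
- move=> x; rewrite seq_fsetE => /mapP[t ts ->]; split => //=.
  rewrite (allP ps t ts) /=.
  rewrite -s1; apply: elem_le_sum ts.
  by apply/allP => u us'; move/allP: ps => /(_ u us') /ltW.
- by rewrite (perm_big _ (seq_fset_perm _ _)) undup_id ?map_inj_uniq ?big_map // => x y [].
Qed.
Arguments ens_sum {R V K f} hf {a} Ka {s}.

Lemma sum_single (R : realType) (V : lmodType R) (K : set V) (f : R * V -> R)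
  (hf : prob_weight K f) (a : V) (Ka : K a) (s : seq R) :
  uniq s -> all (fun u => 0 < u) s -> 0 < \sum_(u <- s) u -> \sum_(u <- s) u <= 1 ->
  \sum_(u <- s) f (u, a) = f (\sum_(u <- s) u, a).
Proof.
move=> us ps sp sl.
set σ := \sum_(u <- s) u in sp sl *.
have [e1|lt1] := eqVneq σ 1.
  have h1 := ens_sum hf Ka us ps e1.
  have h2 : \sum_(u <- [:: σ]) f (u, a) = 1.
    by apply: (ens_sum hf Ka); rewrite /= ?sp ?big_seq1.
  by rewrite h1; move: h2; rewrite big_seq1.
have r0 : 0 < 1 - σ by rewrite subr_gt0 lt_neqAle lt1 sl.
have [u1 [u2 [u10 u20 hu hne /andP[n1 n2]]]] := pick2 _ (σ :: s) r0.
move: n1 n2; rewrite !in_cons !negb_or => /andP[n1 n1'] /andP[n2 n2'].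
have E1 : f (u1, a) + (f (u2, a) + \sum_(u <- s) f (u, a)) = 1.
  have := ens_sum hf Ka (s := [:: u1, u2 & s]); rewrite !big_cons => H; simple apply H.
  - by rewrite /= !in_cons negb_or hne n1' n2' us.
  - by rewrite /= u10 u20 ps.
  - rewrite -/σ; lra.
have E2 : f (σ, a) + (f (u1, a) + f (u2, a)) = 1.
  have := ens_sum hf Ka (s := [:: σ; u1; u2]); rewrite !big_cons => H; move: (H); rewrite !big_nil !addr0 => H2; simple apply H2.
  - by rewrite /= !in_cons !in_nil !orbF negb_or !(eq_sym σ) n1 n2 hne.
  - by rewrite /= u10 u20 sp.
  - lra.
lra.
Qed.

Arguments sum_single {R V K f} hf {a} Ka {s}.

Lemma add_g (R : realType) (V : lmodType R) (K : set V) (f : R * V -> R)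
  (hf : prob_weight K f) (a : V) (Ka : K a) (x y : R) :
  0 < x -> 0 < y -> x + y <= 1 -> f (x + y, a) = f (x, a) + f (y, a).
Proof.
move=> x0 y0 xy.
have [u1 [u2 [u10 u20 hu hne /andP[n1 n2]]]] := pick2 _ [:: x] y0.
move: n1 n2; rewrite !in_cons !in_nil !orbF => n1 n2.
have E1 : f (x, a) + (f (u1, a) + f (u2, a)) = f (x + (u1 + u2), a).
  have := sum_single hf Ka (s := [:: x; u1; u2]); rewrite !big_cons => H.
  move: (H); rewrite !big_nil !addr0 => H2; simple apply H2.
  - by rewrite /= !in_cons !in_nil !orbF negb_or !(eq_sym x) n1 n2 hne.
  - by rewrite /= u10 u20 x0.
  - lra.
  - lra.
have E2 : f (u1, a) + f (u2, a) = f (u1 + u2, a).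
  have := sum_single hf Ka (s := [:: u1; u2]); rewrite !big_cons => H.
  move: (H); rewrite !big_nil !addr0 => H2; simple apply H2.
  - by rewrite /= !in_cons !in_nil !orbF hne.
  - by rewrite /= u10 u20.
  - lra.
  - lra.
by rewrite -hu -E1 E2.
Qed.
Arguments add_g {R V K f} hf {a} Ka {x y}.

Lemma g_bounds (R : realType) (V : lmodType R) (K : set V) (f : R * V -> R)
  (hf : prob_weight K f) (a : V) (Ka : K a) (t : R) :
  0 < t -> t <= 1 -> 0 <= f (t, a) <= 1.
Proof. by move=> t0 t1; apply: hf.1; split => //=; rewrite t0 t1. Qed.

Arguments g_bounds {R V K f} hf {a} Ka {t}.

Lemma mono_g (R : realType) (V : lmodType R) (K : set V) (f : R * V -> R)
  (hf : prob_weight K f) (a : V) (Ka : K a) (x y : R) :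
  0 < x -> x <= y -> y <= 1 -> f (x, a) <= f (y, a).
Proof.
move=> x0 xy y1; have [->|ne] := eqVneq x y; first by [].
have d0 : 0 < y - x by rewrite subr_gt0 lt_neqAle ne xy.
have := add_g hf Ka (x := x) (y := y - x) x0 d0 ltac:(lra).
rewrite addrC subrK => ->.
have /andP[h _] := g_bounds hf Ka d0 ltac:(lra).
lra.
Qed.

Arguments mono_g {R V K f} hf {a} Ka {x y}.

Lemma mul_g (R : realType) (V : lmodType R) (K : set V) (f : R * V -> R)
  (hf : prob_weight K f) (a : V) (Ka : K a) (x : R) (m : nat) :
  0 < x -> (m.+1)%:R * x <= 1 -> f ((m.+1)%:R * x, a) = (m.+1)%:R * f (x, a).
Proof.
move=> x0; elim: m => [|m IH]; first by rewrite !mul1r.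
move=> hm.
have mx0 : 0 < (m.+1)%:R * x by rewrite mulr_gt0 // ltr0Sn.
have e : (m.+2)%:R * x = (m.+1)%:R * x + x.
  by rewrite -[(m.+2)%:R]natr1 mulrDl mul1r.
rewrite e in hm *.
rewrite (add_g hf Ka mx0 x0 hm) IH; last by lra.
by rewrite -[(m.+2)%:R]natr1 mulrDl mul1r.
Qed.

Arguments mul_g {R V K f} hf {a} Ka {x m}.

Lemma g_one (R : realType) (V : lmodType R) (K : set V) (f : R * V -> R)
  (hf : prob_weight K f) (a : V) (Ka : K a) : f (1, a) = 1.
Proof.
have := ens_sum hf Ka (s := [:: 1]); rewrite !big_seq1; apply => //=.
by rewrite ltr01.
Qed.

Arguments g_one {R V K f} hf {a} Ka.

Lemma g_frac (R : realType) (V : lmodType R) (K : set V) (f : R * V -> R)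
  (hf : prob_weight K f) (a : V) (Ka : K a) (n k : nat) :
  (k <= n)%N -> f ((k.+1)%:R / (n.+1)%:R, a) = (k.+1)%:R / (n.+1)%:R.
Proof.
move=> kn.
have n0 : 0 < (n.+1)%:R :> R by rewrite ltr0Sn.
have i0 : 0 < (n.+1)%:R^-1 :> R by rewrite invr_gt0.
have base : f ((n.+1)%:R^-1, a) = (n.+1)%:R^-1.
  have := mul_g hf Ka (m := n) i0; rewrite mulfV ?gt_eqF // (g_one hf Ka) => h.
  have h' := h (lexx _).
  apply: (mulfI (x := (n.+1)%:R)); first by rewrite gt_eqF.
  by rewrite -h' mulfV ?gt_eqF.
rewrite (mul_g hf Ka) //; first by rewrite base.
rewrite ler_pdivrMr // mul1r ler_nat; by [].
Qed.

Arguments g_frac {R V K f} hf {a} Ka {n k}.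

Lemma floor_nat (R : realType) (x : R) : 0 <= x ->
  exists k : nat, k%:R <= x < (k.+1)%:R.
Proof.
move=> x0; have := archi_boundP x0.
elim: (Num.Def.archi_bound x) => [|b IH]; first by move=> h; lra.
move=> hb; case: (ltP x b%:R) => h; first exact: IH.
by exists b; rewrite h hb.
Qed.

Lemma small_zero (R : realType) (d : R) : 0 <= d ->
  (forall n : nat, d <= (n.+1)%:R^-1) -> d = 0.
Proof.
move=> d0 h; apply/eqP; rewrite eq_le d0 andbT leNgt; apply/negP => dp.
have i0 : 0 <= d^-1 by rewrite invr_ge0 ltW.
have [k /andP[_ hk]] := floor_nat _ _ i0.
have := h k; rewrite -(@ler_pM2l _ (k.+1)%:R) ?ltr0Sn // mulfV ?gt_eqF ?ltr0Sn //.
rewrite -ler_pdivlMr // mul1r => hk'.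
lra.
Qed.

Lemma pt_g (R : realType) (V : lmodType R) (K : set V) (f : R * V -> R)
  (hf : prob_weight K f) (a : V) (Ka : K a) (t : R) :
  0 < t -> t <= 1 -> f (t, a) = t.
Proof.
move=> t0 t1; have [->|tne] := eqVneq t 1; first by rewrite (g_one hf Ka).
have tl1 : t < 1 by rewrite lt_neqAle tne t1.
apply/eqP; rewrite -subr_eq0 -normr_eq0; apply/eqP; apply: small_zero => // n.
set N := (n.+1)%:R : R.
have N0 : 0 < N by rewrite ltr0Sn.
have [k /andP[kl ku]] := floor_nat _ (N * t) (mulr_ge0 (ltW N0) (ltW t0)).
have kn : (k <= n)%N.
  have : k%:R < N by apply: le_lt_trans kl _; rewrite -[X in _ < X]mulr1 ltr_pM2l.
  by rewrite ltr_nat ltnS.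
set i := N^-1.
have Bt : k%:R * i <= t by rewrite ler_pdivrMr // mulrC.
have tA : t < (k.+1)%:R * i by rewrite ltr_pdivlMr // mulrC.
have AB : (k.+1)%:R * i = k%:R * i + i by rewrite -natr1 mulrDl mul1r.
have A1 : (k.+1)%:R * i <= 1 by rewrite ler_pdivrMr // mul1r ler_nat.
have /andP[g0 g1] := g_bounds hf Ka t0 t1.
have up : f (t, a) <= (k.+1)%:R * i.
  rewrite -(g_frac hf Ka kn); apply: (mono_g hf Ka) => //; exact: ltW.
have lo : t - f (t, a) <= i.
  case: k kl ku kn Bt tA AB A1 up => [|k] kl ku kn Bt tA AB A1 up.
    rewrite mul0r add0r in AB; lra.
  have kn' : (k <= n)%N by apply: ltnW.
  have := g_frac hf Ka kn'; rewrite -/N -/i => e.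
  have Bp : 0 < (k.+1)%:R * i by rewrite mulr_gt0 ?ltr0Sn // invr_gt0.
  have := mono_g hf Ka Bp Bt t1; rewrite e; lra.
rewrite ler_norml; apply/andP; split; lra.
Qed.

Arguments pt_g {R V K f} hf {a} Ka {t}.

Theorem theorem1p11 (R : realType) (V : lmodType R) (K : set V)
    (hK : convex_set (K : set (convex_lmodType V))) :
  prob_weight K (fun x : R * V => x.1) /\
  (forall f : R * V -> R, prob_weight K f ->
     forall x : R * V, outcome K x -> f x = x.1).
Proof.
split.
- split; first by move=> x [/andP[h1 h2] _]; rewrite ltW.
  by move=> E [].
- move=> f hf [t a] [/= /andP[t0 t1] Ka].
  exact: (pt_g hf Ka t0 t1).
Qed.
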